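(* Let $(X,\sigma_X)$, $(Y,\sigma_Y)$ be one-sided full shifts and $\pi:X\to Y$ a one-block factor map. Let $f\in Bow(X)$, $\mu_f$ its unique invariant Gibbs measure, $f_n(x)=e^{f(x)+\cdots+f(\sigma_X^{n-1}x)}$, and $\bar g_n(y)=\sup_{E_n(y)}\sum_{x\in E_n(y)}f_n(x)$. Suppose there exists $A>0$ such that $$\frac1A\le\frac{\bar g_n(y)}{|\pi^{-1}[y_1\cdots y_n]|\,f_n(x)}\le A$$ for all $n$, $y\in Y$, and all $x\in[x_1\cdots x_n]$ with $\pi([x_1\cdots x_n])\subseteq[y_1\cdots y_n]$. Then $\nu=\pi\mu_f$ is the unique invariant Gibbs measure for a continuous function on $Y$ belonging to $Bow(Y)$.
   Context: Full shift: $\{1,\dots,k\}^{\mathbb N}$ with left shift. One-block factor map: continuous surjection commuting with shifts, $\pi(x)_i$ depending only on $x_i$. $Bow(Z)=\{f\in C(Z):\sup_n\sup\{S_nf(z)-S_nf(z'):z_i=z'_i,1\le i\le n\}<\infty\}$, $S_nf=\sum_{i=0}^{n-1}f\circ\sigma^i$; such $f$ has a unique invariant Gibbs measure ($\mu$ invariant with $C_0^{-1}<\mu([z_1\cdots z_n])/e^{-nP(f)+S_nf(z)}<C_0$ for all $z,n$). $E_n(y)$: any set with exactly one point from each cylinder $[x_1\cdots x_n]$ of $X$ with $\pi([x_1\cdots x_n])\subseteq[y_1\cdots y_n]$; the sup is over all such choices. $|\pi^{-1}[y_1\cdots y_n]|$ is the number of such cylinders. *)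

(* Defs.v *)
From Stdlib Require Import Reals List Arith.
Import ListNotations.
Open Scope R_scope.

(* Alphabet {0,...,k-1} (paper: {1,...,k}); points of the full shift are
   sequences nat -> nat with all letters < k; coordinates are 0-based. *)
Definition point := nat -> nat.
Definition inX (k : nat) (x : point) : Prop := forall i, (x i < k)%nat.

Definition shiftn (i : nat) (x : point) : point := fun j => x (i + j)%nat.

Definition agree (n : nat) (x z : point) : Prop := forall i, (i < n)%nat -> x i = z i.

Fixpoint Rsum (l : list R) : R :=
  match l with [] => 0 | a :: t => a + Rsum t end.

Definition Sn (f : point -> R) (n : nat) (x : point) : R :=
  Rsum (map (fun i => f (shiftn i x)) (seq 0 n)).

Definition continuous_on_shift (k : nat) (f : point -> R) : Prop :=
  forall x, inX k x -> forall eps, 0 < eps ->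
    exists m, forall z, inX k z -> agree m x z -> Rabs (f z - f x) < eps.

Definition Bow (k : nat) (f : point -> R) : Prop :=
  exists C, forall n z z', inX k z -> inX k z' -> agree n z z' ->
    Sn f n z - Sn f n z' <= C.

Definition valid_word (k : nat) (w : list nat) : Prop := Forall (fun a => (a < k)%nat) w.

Fixpoint words (k n : nat) : list (list nat) :=
  match n with
  | O => [[]]
  | S n' => flat_map (fun w => map (fun a => w ++ [a]) (seq 0 k)) (words k n')
  end.

Definition prefix (x : point) (n : nat) : list nat := map x (seq 0 n).

(* A Borel probability measure on the full shift, given by its (Kolmogorov-
   consistent) values on cylinders: m w = mu([w]). *)
Definition inv_prob (k : nat) (m : list nat -> R) : Prop :=
  (forall w, valid_word k w -> 0 <= m w) /\
  m [] = 1 /\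
  (forall w, valid_word k w -> m w = Rsum (map (fun a => m (w ++ [a])) (seq 0 k))) /\
  (* shift invariance: mu(sigma^{-1}[w]) = mu([w]) *)
  (forall w, valid_word k w -> m w = Rsum (map (fun a => m (a :: w)) (seq 0 k))).

(* Gibbs property for f (P plays the role of the pressure P(f), which is
   forced by the Gibbs inequalities) *)
Definition Gibbs (k : nat) (f : point -> R) (m : list nat -> R) : Prop :=
  exists P C0, 0 < C0 /\
    forall z n, inX k z -> (1 <= n)%nat ->
      / C0 < m (prefix z n) / exp (- INR n * P + Sn f n z) < C0.

Definition same_measure (k : nat) (m1 m2 : list nat -> R) : Prop :=
  forall w, valid_word k w -> m1 w = m2 w.

Definition pimap (p : nat -> nat) (x : point) : point := fun i => p (x i).

Definition pushforward (k : nat) (p : nat -> nat) (m : list nat -> R) (v : list nat) : R :=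
  Rsum (map m (filter (fun w => if list_eq_dec Nat.eq_dec (map p w) v then true else false) (words k (length v)))).

Definition preimage_words (k : nat) (p : nat -> nat) (y : point) (n : nat) : list (list nat) :=
  filter (fun w => if list_eq_dec Nat.eq_dec (map p w) (prefix y n) then true else false) (words k n).

Definition fn (f : point -> R) (n : nat) (x : point) : R := exp (Sn f n x).

(* values sum_{x in E_n(y)} f_n(x): E_n(y) is given by a choice c w in [w]
   for each cylinder [w] with pi([w]) ⊆ [y_0..y_{n-1}] *)
Definition En_sums (k : nat) (p : nat -> nat) (f : point -> R) (n : nat) (y : point) (s : R) : Prop :=
  exists c : list nat -> point,
    (forall w, In w (preimage_words k p y n) ->
       inX k (c w) /\ forall i, (i < n)%nat -> c w i = nth i w 0%nat) /\
    s = Rsum (map (fun w => fn f n (c w)) (preimage_words k p y n)).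

(* Main.v *)
Require Import Defs.
From Stdlib Require Import Reals List Arith Lia Lra FunctionalExtensionality.
Import ListNotations.
Open Scope R_scope.

Definition indR (b : bool) : R := if b then 1 else 0.
Definition leqb (v w : list nat) : bool :=
  if list_eq_dec Nat.eq_dec v w then true else false.

Lemma Rsum_app l1 l2 : Rsum (l1 ++ l2) = Rsum l1 + Rsum l2.
Proof. induction l1; simpl; [lra|rewrite IHl1; lra]. Qed.

Lemma Rsum_ext {A} (l : list A) F G : (forall x, In x l -> F x = G x) ->
  Rsum (map F l) = Rsum (map G l).
Proof. induction l; simpl; intros H; auto. rewrite H, IHl; auto. Qed.

Lemma Rsum_le {A} (l : list A) F G : (forall x, In x l -> F x <= G x) ->
  Rsum (map F l) <= Rsum (map G l).
Proof. induction l; simpl; intros H; [lra|].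
  assert (Rsum (map F l) <= Rsum (map G l)) by (apply IHl; intros; apply H; simpl; auto).
  specialize (H a (or_introl eq_refl)). lra. Qed.

Lemma Rsum_plus {A} (l : list A) F G :
  Rsum (map (fun x => F x + G x) l) = Rsum (map F l) + Rsum (map G l).
Proof. induction l; simpl; [lra|rewrite IHl; lra]. Qed.

Lemma Rsum_scal {A} (l : list A) a F :
  Rsum (map (fun x => a * F x) l) = a * Rsum (map F l).
Proof. induction l; simpl; [lra|rewrite IHl; lra]. Qed.

Lemma Rsum_zero {A} (l : list A) : Rsum (map (fun _ => 0) l) = 0.
Proof. induction l; simpl; [lra|rewrite IHl; lra]. Qed.

Lemma Rsum_flat_map {A B} (l : list A) (g : A -> list B) F :
  Rsum (map F (flat_map g l)) = Rsum (map (fun x => Rsum (map F (g x))) l).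
Proof. induction l; simpl; auto. rewrite map_app, Rsum_app, IHl; auto. Qed.

Lemma Rsum_map_map {A B} (l : list A) (g : A -> B) F :
  Rsum (map F (map g l)) = Rsum (map (fun x => F (g x)) l).
Proof. rewrite map_map; auto. Qed.

Lemma Rsum_swap {A B} (l1 : list A) (l2 : list B) F :
  Rsum (map (fun x => Rsum (map (fun y => F x y) l2)) l1) =
  Rsum (map (fun y => Rsum (map (fun x => F x y) l1)) l2).
Proof. induction l1; simpl.
  - rewrite Rsum_zero; auto.
  - rewrite IHl1, <- Rsum_plus; auto. Qed.

Lemma Rsum_nonneg {A} (l : list A) F : (forall x, In x l -> 0 <= F x) -> 0 <= Rsum (map F l).
Proof. intros H. rewrite <- (Rsum_zero l). apply Rsum_le; auto. Qed.

Lemma Rsum_ge_In {A} (l : list A) F a : (forall x, In x l -> 0 <= F x) -> In a l ->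
  F a <= Rsum (map F l).
Proof. induction l; simpl; intros H Ha; [contradiction|]. destruct Ha as [->|Ha].
  - assert (0 <= Rsum (map F l)) by (apply Rsum_nonneg; auto). lra.
  - assert (F a <= Rsum (map F l)) by (apply IHl; [intros; apply H; simpl; auto|auto]). specialize (H a0 (or_introl eq_refl)); lra. Qed.

Lemma Rsum_zero_each {A} (l : list A) F : (forall x, In x l -> 0 <= F x) ->
  Rsum (map F l) <= 0 -> forall x, In x l -> F x = 0.
Proof. intros H Hs x Hx. pose proof (Rsum_ge_In l F x H Hx). specialize (H x Hx). lra. Qed.

Lemma Rsum_le_const {A} (l : list A) F c : (forall x, In x l -> F x <= c) ->
  Rsum (map F l) <= INR (length l) * c.
Proof. induction l; intros H; [simpl; lra|]. cbn [map Rsum length]. rewrite S_INR.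
  assert (Rsum (map F l) <= INR (length l) * c) by (apply IHl; intros; apply H; simpl; auto).
  specialize (H a (or_introl eq_refl)). lra. Qed.

Lemma Rsum_ge_const {A} (l : list A) F c : (forall x, In x l -> c <= F x) ->
  INR (length l) * c <= Rsum (map F l).
Proof. induction l; intros H; [simpl; lra|]. cbn [map Rsum length]. rewrite S_INR.
  assert (INR (length l) * c <= Rsum (map F l)) by (apply IHl; intros; apply H; simpl; auto).
  specialize (H a (or_introl eq_refl)). lra. Qed.

Lemma length_filter_ind {A} (l : list A) P :
  INR (length (filter P l)) = Rsum (map (fun x => indR (P x)) l).
Proof. induction l; [reflexivity|]. cbn [filter map]. destruct (P a); cbn [length map Rsum]; rewrite <- IHl; unfold indR; [rewrite S_INR|]; lra. Qed.

Lemma Rsum_filter {A} (l : list A) P F :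
  Rsum (map F (filter P l)) = Rsum (map (fun x => indR (P x) * F x) l).
Proof. induction l; simpl; auto. destruct (P a); simpl; rewrite IHl; unfold indR; lra. Qed.

Lemma Rsum_delta (L : list nat) c x : NoDup L -> In c L ->
  Rsum (map (fun b => indR (Nat.eqb c b) * x) L) = x.
Proof. induction L as [|a L IHL]; simpl; intros Hn Hc; [contradiction|]. inversion Hn; subst.
  destruct Hc as [->|Hc].
  - rewrite Nat.eqb_refl. rewrite (Rsum_ext _ _ (fun _ => 0)). rewrite Rsum_zero; unfold indR; lra.
    intros y Hy. destruct (Nat.eqb_spec c y); subst; [contradiction|]. unfold indR; lra.
  - destruct (Nat.eqb_spec c a); subst; [contradiction|]. rewrite IHL; auto. unfold indR; lra. Qed.

Lemma words_S k n : words k (S n) = flat_map (fun w => map (fun a => w ++ [a]) (seq 0 k)) (words k n).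
Proof. reflexivity. Qed.

Lemma words_1 k : words k 1 = map (fun a => [a]) (seq 0 k).
Proof. simpl. rewrite app_nil_r. reflexivity. Qed.

Lemma words_spec k n w : In w (words k n) <-> length w = n /\ valid_word k w.
Proof. revert w; induction n; intros w.
  - simpl. split. intros [<-|[]]; split; auto; constructor.
    intros [H _]. destruct w; [auto|discriminate].
  - rewrite words_S, in_flat_map. split.
    + intros [w' [Hw' Hin]]. apply in_map_iff in Hin. destruct Hin as [a [<- Ha]].
      apply in_seq in Ha. apply IHn in Hw'. destruct Hw' as [Hl Hv].
      split. rewrite length_app; simpl; lia. unfold valid_word. apply Forall_app; split; auto. constructor; [lia|constructor].
    + intros [Hl Hv]. destruct (exists_last (l:=w)) as [w' [a ->]].
      { intros ->; discriminate. }
      rewrite length_app in Hl; simpl in Hl. unfold valid_word in Hv. apply Forall_app in Hv.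
      destruct Hv as [Hv1 Hv2]. inversion Hv2; subst.
      exists w'. split. apply IHn; split; auto; lia. apply in_map_iff. exists a; split; auto.
      apply in_seq; lia. Qed.

Lemma words_app k j n F :
  Rsum (map F (words k (j + n))) =
  Rsum (map (fun v => Rsum (map (fun w => F (v ++ w)) (words k n))) (words k j)).
Proof. revert F; induction n; intros F.
  - rewrite Nat.add_0_r. apply Rsum_ext. intros v _. simpl. rewrite app_nil_r. lra.
  - rewrite <- plus_n_Sm, words_S, Rsum_flat_map.
    rewrite (IHn (fun x => Rsum (map F (map (fun a => x ++ [a]) (seq 0 k))))).
    apply Rsum_ext. intros v _. rewrite words_S, Rsum_flat_map. apply Rsum_ext.
    intros w _. rewrite !Rsum_map_map. apply Rsum_ext. intros a _. rewrite app_assoc; auto. Qed.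

Lemma Sn_0 F x : Sn F 0 x = 0.
Proof. reflexivity. Qed.

Lemma Sn_S F n x : Sn F (S n) x = Sn F n x + F (shiftn n x).
Proof. unfold Sn. rewrite seq_S, map_app, Rsum_app. simpl. lra. Qed.

Lemma Sn_ext F G n x x' : (forall i, (i < n)%nat -> F (shiftn i x) = G (shiftn i x')) ->
  Sn F n x = Sn G n x'.
Proof. induction n; intros H; auto. rewrite !Sn_S, IHn, H; auto. Qed.

Lemma Sn_plus F G n x : Sn (fun y => F y + G y) n x = Sn F n x + Sn G n x.
Proof. induction n; [rewrite !Sn_0; lra|]. rewrite !Sn_S, IHn. lra. Qed.

Lemma shiftn_comp j n x : shiftn n (shiftn j x) = shiftn (j + n) x.
Proof. apply functional_extensionality; intros i. unfold shiftn. f_equal. lia. Qed.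

Lemma Sn_add F j n x : Sn F (j + n) x = Sn F j x + Sn F n (shiftn j x).
Proof. induction n. rewrite Nat.add_0_r, Sn_0; lra.
  rewrite <- plus_n_Sm, !Sn_S, IHn, shiftn_comp. lra. Qed.

Definition ext (w : list nat) : point := fun i => nth i w 0%nat.

Lemma ext_inX k w : (0 < k)%nat -> valid_word k w -> inX k (ext w).
Proof. intros Hk Hv i. unfold ext. destruct (Nat.lt_ge_cases i (length w)).
  - unfold valid_word in Hv. rewrite Forall_forall in Hv. apply Hv, nth_In; auto.
  - rewrite nth_overflow; auto. Qed.

Lemma prefix_ext w : prefix (ext w) (length w) = w.
Proof. unfold prefix, ext. apply nth_ext with (d := 0%nat) (d' := 0%nat).
  rewrite length_map, length_seq; auto.
  intros i Hi. rewrite length_map, length_seq in Hi.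
  rewrite nth_indep with (d' := ext w 0%nat) by (rewrite length_map, length_seq; auto).
  rewrite map_nth. rewrite seq_nth; auto. Qed.

Lemma prefix_length x n : length (prefix x n) = n.
Proof. unfold prefix; rewrite length_map, length_seq; auto. Qed.

Lemma prefix_S x n : prefix x (S n) = prefix x n ++ [x n].
Proof. unfold prefix. rewrite seq_S, map_app; auto. Qed.

Lemma prefix_valid k x n : inX k x -> valid_word k (prefix x n).
Proof. intros H. unfold valid_word, prefix. apply Forall_forall. intros a Ha.
  apply in_map_iff in Ha. destruct Ha as [i [<- _]]. apply H. Qed.

Lemma app_len_inj (a b v w : list nat) : length a = length v -> a ++ b = v ++ w -> a = v /\ b = w.
Proof. revert v; induction a; intros v Hl H; destruct v; simpl in *; try discriminate; auto.
  injection H; intros H1 H2; subst. injection Hl; intros Hl'. destruct (IHa v Hl' H1); subst; auto. Qed.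

Lemma prefix_add z j n : prefix z (j + n) = prefix z j ++ prefix (shiftn j z) n.
Proof. induction n. rewrite Nat.add_0_r. simpl. rewrite app_nil_r; auto.
  rewrite <- plus_n_Sm, !prefix_S, IHn, app_assoc. unfold shiftn. reflexivity. Qed.

Lemma valid_app k v w : valid_word k v -> valid_word k w -> valid_word k (v ++ w).
Proof. unfold valid_word; intros; apply Forall_app; auto. Qed.

Lemma cons_sum L m v n : inv_prob L m -> valid_word L v ->
  Rsum (map (fun w => m (v ++ w)) (words L n)) = m v.
Proof. intros [_ [_ [Hc _]]] Hv. induction n.
  - simpl. rewrite app_nil_r. lra.
  - rewrite words_S, Rsum_flat_map, <- IHn. apply Rsum_ext. intros w Hw.
    rewrite Rsum_map_map. apply words_spec in Hw. destruct Hw as [_ Hw].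
    rewrite (Hc (v ++ w)) by (apply valid_app; auto). apply Rsum_ext. intros a _.
    rewrite app_assoc; auto. Qed.

Lemma inv_sum L m w n : inv_prob L m -> valid_word L w ->
  Rsum (map (fun v => m (v ++ w)) (words L n)) = m w.
Proof. intros Hm Hw. destruct Hm as [_ [_ [_ Hi]]]. induction n.
  - simpl. lra.
  - change (S n) with (1 + n)%nat. rewrite words_app, words_1, Rsum_map_map.
    rewrite Rsum_swap. rewrite <- IHn. apply Rsum_ext. intros v Hv.
    apply words_spec in Hv. destruct Hv as [_ Hv].
    rewrite (Hi (v ++ w)) by (apply valid_app; auto). apply Rsum_ext. intros a _. reflexivity. Qed.

Lemma total_sum L m n : inv_prob L m -> Rsum (map m (words L n)) = 1.
Proof. intros Hm. pose proof (cons_sum L m [] n Hm (Forall_nil _)) as H. simpl in H.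
  destruct Hm as [_ [H1 _]]. rewrite <- H1, <- H. reflexivity. Qed.

Definition Ebw (g : point -> R) (P : R) (z : point) (n : nat) := exp (- INR n * P + Sn g n z).

Lemma gibbs_bounds L g m : Gibbs L g m -> exists P C, 0 < C /\
  forall z n, inX L z -> (1 <= n)%nat ->
   / C * Ebw g P z n < m (prefix z n) < C * Ebw g P z n.
Proof. intros [P [C [HC H]]]. exists P, C. split; auto. intros z n Hz Hn.
  specialize (H z n Hz Hn). unfold Ebw. set (E := exp _) in *.
  assert (HE : 0 < E) by apply exp_pos. set (M := m _) in *.
  assert (M = M / E * E) by (field; lra). split; nra. Qed.

Lemma Ebw_add g P z j n : Ebw g P z (j + n) = Ebw g P z j * Ebw g P (shiftn j z) n.
Proof. unfold Ebw. rewrite <- exp_plus, plus_INR, Sn_add. f_equal. ring. Qed.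

Lemma Rsum_minus {A} (l : list A) F G :
  Rsum (map (fun x => F x - G x) l) = Rsum (map F l) - Rsum (map G l).
Proof. induction l; simpl; [lra|rewrite IHl; lra]. Qed.

Definition UHyp (L : nat) (m1 m2 : list nat -> R) (D c : R) : Prop :=
  inv_prob L m1 /\ inv_prob L m2 /\ 0 < D /\ 0 < c /\
  (forall w, valid_word L w -> (1 <= length w)%nat -> 0 < m2 w /\ 0 < m1 w /\ m1 w <= D * m2 w) /\
  (forall v w, valid_word L v -> valid_word L w -> (1 <= length v)%nat -> (1 <= length w)%nat ->
     c * m2 v * m2 w <= m2 (v ++ w)).

Definition qq (m1 m2 : list nat -> R) w := m1 w * m1 w / m2 w.
Definition rr (m1 m2 : list nat -> R) w := m1 w / m2 w.
Definition VV L m1 m2 n := Rsum (map (qq m1 m2) (words L n)).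

Lemma inW L n w : In w (words L n) -> valid_word L w /\ length w = n.
Proof. intros H; apply words_spec in H; tauto. Qed.

Lemma VV_le L m1 m2 D c n : UHyp L m1 m2 D c -> (1 <= n)%nat -> VV L m1 m2 n <= D.
Proof. intros (H1 & H2 & HD & Hc & Hp & Hq) Hn. unfold VV.
  rewrite <- (Rmult_1_r D), <- (total_sum L m1 n H1), <- Rsum_scal.
  apply Rsum_le. intros w Hw. destruct (inW _ _ _ Hw) as [Hv Hl].
  destruct (Hp w Hv ltac:(lia)) as (a & b & e). unfold qq.
  apply Rmult_le_reg_r with (m2 w); auto. field_simplify; nra. Qed.

Lemma T1_eq L m1 m2 D c n : UHyp L m1 m2 D c -> (1 <= n)%nat ->
  Rsum (map (fun v => Rsum (map (fun w =>
     m2 (v ++ w) * (rr m1 m2 (v ++ w) - rr m1 m2 v) ^ 2) (words L n))) (words L n))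
  = VV L m1 m2 (n + n) - VV L m1 m2 n.
Proof. intros HH Hn. pose proof HH as (H1 & H2 & HD & Hc & Hp & Hq).
  unfold VV. rewrite words_app, <- Rsum_minus. apply Rsum_ext. intros v Hv.
  destruct (inW _ _ _ Hv) as [Hvv Hvl].
  destruct (Hp v Hvv ltac:(lia)) as (a & b & e).
  rewrite (Rsum_ext _ _ (fun w => qq m1 m2 (v ++ w) - (2 * rr m1 m2 v) * m1 (v ++ w)
        + (rr m1 m2 v ^ 2) * m2 (v ++ w))).
  - rewrite Rsum_plus, Rsum_minus, !Rsum_scal, (cons_sum L m1 v n H1 Hvv), (cons_sum L m2 v n H2 Hvv).
    unfold qq, rr. field. lra.
  - intros w Hw. destruct (inW _ _ _ Hw) as [Hwv Hwl].
    destruct (Hp (v ++ w) ltac:(apply valid_app; auto) ltac:(rewrite length_app; lia)) as (a' & b' & e').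
    unfold qq, rr. field. lra. Qed.

Lemma T2_eq L m1 m2 D c n : UHyp L m1 m2 D c -> (1 <= n)%nat ->
  Rsum (map (fun v => Rsum (map (fun w =>
     m2 (v ++ w) * (rr m1 m2 (v ++ w) - rr m1 m2 w) ^ 2) (words L n))) (words L n))
  = VV L m1 m2 (n + n) - VV L m1 m2 n.
Proof. intros HH Hn. pose proof HH as (H1 & H2 & HD & Hc & Hp & Hq).
  unfold VV. rewrite words_app, Rsum_swap, (Rsum_swap _ _ (fun v w => qq m1 m2 (v ++ w))),
   <- Rsum_minus. apply Rsum_ext. intros w Hw.
  destruct (inW _ _ _ Hw) as [Hwv Hwl].
  destruct (Hp w Hwv ltac:(lia)) as (a & b & e).
  rewrite (Rsum_ext _ _ (fun v => qq m1 m2 (v ++ w) - (2 * rr m1 m2 w) * m1 (v ++ w)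
        + (rr m1 m2 w ^ 2) * m2 (v ++ w))).
  - rewrite Rsum_plus, Rsum_minus, !Rsum_scal, (inv_sum L m1 w n H1 Hwv), (inv_sum L m2 w n H2 Hwv).
    unfold qq, rr. field. lra.
  - intros v Hv. destruct (inW _ _ _ Hv) as [Hvv Hvl].
    destruct (Hp (v ++ w) ltac:(apply valid_app; auto) ltac:(rewrite length_app; lia)) as (a' & b' & e').
    unfold qq, rr. field. lra. Qed.

Lemma low_eq L m1 m2 D c n : UHyp L m1 m2 D c -> (1 <= n)%nat ->
  Rsum (map (fun v => Rsum (map (fun w =>
     m2 v * m2 w * (rr m1 m2 v - rr m1 m2 w) ^ 2) (words L n))) (words L n))
  = 2 * VV L m1 m2 n - 2.
Proof. intros HH Hn. pose proof HH as (H1 & H2 & HD & Hc & Hp & Hq).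
  rewrite (Rsum_ext _ _ (fun v => qq m1 m2 v - 2 * m1 v + VV L m1 m2 n * m2 v)).
  - rewrite Rsum_plus, Rsum_minus, !Rsum_scal, (total_sum L m1 n H1), (total_sum L m2 n H2).
    unfold VV. ring.
  - intros v Hv. destruct (inW _ _ _ Hv) as [Hvv Hvl].
    destruct (Hp v Hvv ltac:(lia)) as (a & b & e).
    transitivity (qq m1 m2 v * Rsum (map m2 (words L n)) - 2 * m1 v * Rsum (map m1 (words L n))
       + m2 v * Rsum (map (qq m1 m2) (words L n))).
    + rewrite <- !Rsum_scal, <- Rsum_minus, <- Rsum_plus. apply Rsum_ext.
      intros w Hw. destruct (inW _ _ _ Hw) as [Hwv Hwl].
      destruct (Hp w Hwv ltac:(lia)) as (a' & b' & e').
      unfold qq, rr. field. lra.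
    + rewrite (total_sum L m1 n H1), (total_sum L m2 n H2). unfold VV. ring. Qed.

Lemma key_ineq L m1 m2 D c n : UHyp L m1 m2 D c -> (1 <= n)%nat ->
  c * (VV L m1 m2 n - 1) <= 2 * (VV L m1 m2 (n + n) - VV L m1 m2 n).
Proof. intros HH Hn. pose proof HH as (H1 & H2 & HD & Hc & Hp & Hq).
  set (S := Rsum (map (fun v => Rsum (map (fun w =>
     m2 (v ++ w) * (rr m1 m2 v - rr m1 m2 w) ^ 2) (words L n))) (words L n))).
  assert (Hlow : c * (2 * VV L m1 m2 n - 2) <= S).
  { rewrite <- (low_eq L m1 m2 D c n HH Hn), <- Rsum_scal. apply Rsum_le. intros v Hv.
    rewrite <- Rsum_scal. apply Rsum_le. intros w Hw.
    destruct (inW _ _ _ Hv) as [Hvv Hvl]. destruct (inW _ _ _ Hw) as [Hwv Hwl].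
    pose proof (Hq v w Hvv Hwv ltac:(lia) ltac:(lia)).
    pose proof (pow2_ge_0 (rr m1 m2 v - rr m1 m2 w)).
    replace (c * (m2 v * m2 w * (rr m1 m2 v - rr m1 m2 w) ^ 2)) with
      ((c * m2 v * m2 w) * (rr m1 m2 v - rr m1 m2 w) ^ 2) by ring.
    apply Rmult_le_compat_r; auto. }
  assert (Hup : S <= 2 * (VV L m1 m2 (n + n) - VV L m1 m2 n) + 2 * (VV L m1 m2 (n + n) - VV L m1 m2 n)).
  { rewrite <- (T1_eq L m1 m2 D c n HH Hn) at 1. rewrite <- (T2_eq L m1 m2 D c n HH Hn).
    unfold S. rewrite <- !Rsum_scal, <- Rsum_plus. apply Rsum_le. intros v Hv.
    rewrite <- !Rsum_scal, <- Rsum_plus. apply Rsum_le. intros w Hw.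
    destruct (inW _ _ _ Hv) as [Hvv Hvl]. destruct (inW _ _ _ Hw) as [Hwv Hwl].
    destruct (Hp (v ++ w) ltac:(apply valid_app; auto) ltac:(rewrite length_app; lia)) as (a' & b' & e').
    set (R0 := rr m1 m2 (v ++ w)). set (a := rr m1 m2 v). set (b := rr m1 m2 w).
    pose proof (pow2_ge_0 (a + b - 2 * R0)). nra. }
  lra. Qed.

Fixpoint dbl (t n : nat) : nat := match t with O => n | S t => (dbl t n + dbl t n)%nat end.
Lemma dbl_ge t n : (1 <= n)%nat -> (1 <= dbl t n)%nat.
Proof. induction t; simpl; lia. Qed.

Lemma growth L m1 m2 D c n : UHyp L m1 m2 D c -> (1 <= n)%nat -> 0 <= VV L m1 m2 n - 1 ->
  forall t, (VV L m1 m2 n - 1) * (1 + INR t * (c / 2)) <= VV L m1 m2 (dbl t n) - 1.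
Proof. intros HH Hn H0 t. pose proof HH as (H1 & H2 & HD & Hc & Hp & Hq). induction t.
  - simpl. lra.
  - pose proof (key_ineq L m1 m2 D c (dbl t n) HH (dbl_ge t n Hn)). simpl dbl.
    rewrite S_INR. pose proof (pos_INR t).
    set (a := VV L m1 m2 n - 1) in *. set (b := VV L m1 m2 (dbl t n)) in *.
    assert (0 <= (b - 1 - a * (1 + INR t * (c / 2))) * (1 + c / 2)) by (apply Rmult_le_pos; lra).
    assert (0 <= a * INR t * c * c) by (repeat apply Rmult_le_pos; lra). nra. Qed.

Lemma V_le1 L m1 m2 D c n : UHyp L m1 m2 D c -> (1 <= n)%nat -> VV L m1 m2 n <= 1.
Proof. intros HH Hn. pose proof HH as (H1 & H2 & HD & Hc & Hp & Hq).
  destruct (Rle_or_lt (VV L m1 m2 n) 1) as [?|Hlt]; auto. exfalso.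
  set (d := VV L m1 m2 n - 1).
  destruct (INR_archimed (d * (c / 2)) D) as [t Ht]. unfold d; nra.
  pose proof (growth L m1 m2 D c n HH Hn ltac:(unfold d in *; lra) t).
  pose proof (VV_le L m1 m2 D c (dbl t n) HH (dbl_ge t n Hn)). fold d in H.
  replace (d * (1 + INR t * (c / 2))) with (d + INR t * (d * (c / 2))) in H by ring.
  set (X := INR t * (d * (c / 2))) in *. unfold d in *. lra. Qed.

Lemma UHyp_eq L m1 m2 D c w : UHyp L m1 m2 D c -> valid_word L w -> (1 <= length w)%nat -> m1 w = m2 w.
Proof. intros HH Hw Hl. pose proof HH as (H1 & H2 & HD & Hc & Hp & Hq).
  set (n := length w).
  assert (Hs : Rsum (map (fun u => m2 u * (rr m1 m2 u - 1) ^ 2) (words L n)) <= 0).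
  { rewrite (Rsum_ext _ _ (fun u => qq m1 m2 u - 2 * m1 u + m2 u)).
    rewrite Rsum_plus, Rsum_minus, Rsum_scal, (total_sum L m1 n H1), (total_sum L m2 n H2).
    pose proof (V_le1 L m1 m2 D c n HH Hl). unfold VV in H. lra.
    intros u Hu. destruct (inW _ _ _ Hu) as [Huv Hul].
    destruct (Hp u Huv ltac:(lia)) as (a & b & e). unfold qq, rr. field. lra. }
  assert (Hin : In w (words L n)) by (apply words_spec; auto).
  pose proof (Rsum_zero_each (words L n) (fun u => m2 u * (rr m1 m2 u - 1) ^ 2)) as Hz.
  specialize (Hz ltac:(intros u Hu; destruct (inW _ _ _ Hu) as [Huv Hul];
    destruct (Hp u Huv ltac:(lia)) as (a & b & e); pose proof (pow2_ge_0 (rr m1 m2 u - 1)); nra) Hs w Hin).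
  cbv beta in Hz. destruct (Hp w Hw Hl) as (a & b & e).
  assert (Hr : (rr m1 m2 w - 1) ^ 2 = 0).
  { apply Rmult_eq_reg_l with (m2 w); [|lra]. rewrite Hz; ring. }
  assert (rr m1 m2 w = 1) by nra. unfold rr in H.
  apply Rmult_eq_reg_r with (/ m2 w). fold (m1 w / m2 w). rewrite H. field. lra.
  apply Rinv_neq_0_compat; lra. Qed.

Definition GB L g m P C := forall z n, inX L z -> (1 <= n)%nat ->
   / C * Ebw g P z n < m (prefix z n) < C * Ebw g P z n.

Lemma word_bounds L g m P C : (0 < L)%nat -> GB L g m P C -> forall w, valid_word L w -> (1 <= length w)%nat ->
  / C * Ebw g P (ext w) (length w) < m w < C * Ebw g P (ext w) (length w).
Proof. intros HL H w Hw Hl. pose proof (H (ext w) (length w) (ext_inX L w HL Hw) Hl) as H'.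
  rewrite prefix_ext in H'. exact H'. Qed.

Lemma Ebw_shiftP g P1 P2 z n : Ebw g P1 z n = exp (INR n * (P2 - P1)) * Ebw g P2 z n.
Proof. unfold Ebw. rewrite <- exp_plus. f_equal. ring. Qed.

Lemma cmp L g m1 m2 P1 C1 P2 C2 : (0 < L)%nat -> 0 < C1 -> 0 < C2 -> GB L g m1 P1 C1 -> GB L g m2 P2 C2 ->
  forall w, valid_word L w -> (1 <= length w)%nat ->
  exp (INR (length w) * (P2 - P1)) * m2 w < C1 * C2 * m1 w.
Proof. intros HL HC1 HC2 H1 H2 w Hw Hl.
  destruct (word_bounds L g m1 P1 C1 HL H1 w Hw Hl) as [a1 b1].
  destruct (word_bounds L g m2 P2 C2 HL H2 w Hw Hl) as [a2 b2].
  rewrite (Ebw_shiftP g P1 P2) in a1. set (X := exp _) in *. set (E := Ebw _ _ _ _) in *.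
  assert (0 < X) by apply exp_pos.
  assert (X * m2 w < X * (C2 * E)) by (apply Rmult_lt_compat_l; auto).
  assert (C1 * (/ C1 * (X * E)) < C1 * m1 w) by (apply Rmult_lt_compat_l; auto).
  assert (C1 * (/ C1 * (X * E)) = X * E) by (field; lra).
  assert (C2 * (X * E) < C2 * (C1 * m1 w)) by (apply Rmult_lt_compat_l; lra).
  nra. Qed.

Lemma exp_bounded d K : (forall n, (1 <= n)%nat -> exp (INR n * d) <= K) -> d <= 0.
Proof. intros H. destruct (Rle_or_lt d 0) as [?|Hd]; auto. exfalso.
  destruct (INR_archimed d K Hd) as [n Hn]. specialize (H (S n) ltac:(lia)).
  rewrite S_INR in H. assert (INR (S n) * d <> 0). { rewrite S_INR. pose proof (pos_INR n). nra. }
  pose proof (exp_ineq1 _ H0). rewrite S_INR in H1. lra. Qed.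

Lemma P_eq L g m1 m2 P1 C1 P2 C2 : (0 < L)%nat -> 0 < C1 -> 0 < C2 -> inv_prob L m1 -> inv_prob L m2 ->
  GB L g m1 P1 C1 -> GB L g m2 P2 C2 -> P2 - P1 <= 0.
Proof. intros HL HC1 HC2 I1 I2 H1 H2. apply (exp_bounded _ (C1 * C2)). intros n Hn.
  pose proof (total_sum L m1 n I1) as T1. pose proof (total_sum L m2 n I2) as T2.
  replace (exp (INR n * (P2 - P1))) with (exp (INR n * (P2 - P1)) * Rsum (map m2 (words L n)))
    by (rewrite T2; ring).
  replace (C1 * C2) with (C1 * C2 * Rsum (map m1 (words L n))) by (rewrite T1; ring).
  rewrite <- !Rsum_scal. apply Rsum_le. intros w Hw.
  destruct (inW _ _ _ Hw) as [Hv Hl]. subst n. left. apply (cmp L g m1 m2 P1 C1 P2 C2); auto. Qed.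

Lemma QB L g m P C : (0 < L)%nat -> 0 < C -> GB L g m P C ->
  forall v w, valid_word L v -> valid_word L w -> (1 <= length v)%nat -> (1 <= length w)%nat ->
     / (C * C * C) * m v * m w <= m (v ++ w).
Proof. intros HL HC H v w Hv Hw Hlv Hlw.
  set (z := ext (v ++ w)). set (j := length v). set (n := length w).
  assert (Hz : inX L z) by (apply ext_inX; auto; apply valid_app; auto).
  assert (Hp : prefix z (j + n) = v ++ w).
  { unfold z, j, n. rewrite <- length_app. apply prefix_ext. }
  rewrite prefix_add in Hp. apply app_len_inj in Hp; [|rewrite prefix_length; auto].
  destruct Hp as [Hpv Hpw].
  destruct (H z (j + n)%nat Hz ltac:(lia)) as [a _].
  destruct (H z j Hz ltac:(lia)) as [a1 b1].
  assert (Hz' : inX L (shiftn j z)) by (intros i; apply Hz).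
  destruct (H (shiftn j z) n Hz' ltac:(lia)) as [a2 b2].
  rewrite prefix_add, Hpv, Hpw in a. rewrite Hpv in a1, b1. rewrite Hpw in a2, b2.
  rewrite Ebw_add in a. set (E1 := Ebw g P z j) in *. set (E2 := Ebw g P (shiftn j z) n) in *.
  assert (0 < E1) by apply exp_pos. assert (0 < E2) by apply exp_pos.
  pose proof (Rinv_0_lt_compat C HC).
  assert (0 < / C * E1) by (apply Rmult_lt_0_compat; auto).
  assert (0 < / C * E2) by (apply Rmult_lt_0_compat; auto).
  assert (m v * m w < (C * E1) * (C * E2)) by (apply Rmult_le_0_lt_compat; lra).
  assert (HH : / (C * C * C) * m v * m w < / (C * C * C) * ((C * E1) * (C * E2))).
  { assert (0 < C * C * C) by (repeat apply Rmult_lt_0_compat; auto).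
    rewrite Rmult_assoc. apply Rmult_lt_compat_l; [apply Rinv_0_lt_compat; auto|]. auto. }
  assert (/ (C * C * C) * ((C * E1) * (C * E2)) = / C * (E1 * E2)) by (field; lra). lra. Qed.

Lemma gibbs_unique L g m1 m2 : (0 < L)%nat -> inv_prob L m1 -> inv_prob L m2 ->
  Gibbs L g m1 -> Gibbs L g m2 -> same_measure L m1 m2.
Proof. intros HL I1 I2 G1 G2.
  destruct (gibbs_bounds L g m1 G1) as [P1 [C1 [HC1 B1]]].
  destruct (gibbs_bounds L g m2 G2) as [P2 [C2 [HC2 B2]]].
  assert (E1 : P2 - P1 <= 0) by (apply (P_eq L g m1 m2 P1 C1 P2 C2); auto).
  assert (E2 : P1 - P2 <= 0) by (apply (P_eq L g m2 m1 P2 C2 P1 C1); auto).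
  assert (HP : P1 = P2) by lra. subst P2.
  assert (HU : UHyp L m1 m2 (C1 * C2) (/ (C2 * C2 * C2))).
  { split; [auto|split; [auto|split; [|split; [|split]]]].
    - apply Rmult_lt_0_compat; auto.
    - apply Rinv_0_lt_compat; repeat apply Rmult_lt_0_compat; auto.
    - intros w H H0. split; [|split].
    + destruct (word_bounds L g m2 P1 C2 HL B2 w H H0). pose proof (exp_pos (- INR (length w) * P1 + Sn g (length w) (ext w))).
      unfold Ebw in *. pose proof (Rinv_0_lt_compat C2 HC2). nra.
    + destruct (word_bounds L g m1 P1 C1 HL B1 w H H0). pose proof (exp_pos (- INR (length w) * P1 + Sn g (length w) (ext w))).
      unfold Ebw in *. pose proof (Rinv_0_lt_compat C1 HC1). nra.
    + pose proof (cmp L g m2 m1 P1 C2 P1 C1 HL HC2 HC1 B2 B1 w H H0).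
      replace (P1 - P1) with 0 in H1 by ring. rewrite Rmult_0_r, exp_0 in H1. lra.
    - intros v w Hv Hw Hlv Hlw. apply (QB L g m2 P1 C2); auto. }
  intros w Hw. destruct w as [|a w].
  - destruct I1 as [_ [-> _]]. destruct I2 as [_ [-> _]]. auto.
  - apply (UHyp_eq L m1 m2 (C1 * C2) (/ (C2 * C2 * C2))); auto. simpl; lia. Qed.

Definition qch (k : nat) (p : nat -> nat) (b : nat) : nat :=
  match filter (fun a => Nat.eqb (p a) b) (seq 0 k) with a :: _ => a | [] => 0%nat end.
Definition sec (k : nat) (p : nat -> nat) (y : point) : point := fun i => qch k p (y i).
Definition cnt (k : nat) (p : nat -> nat) (b : nat) : R :=
  Rsum (map (fun a => indR (Nat.eqb (p a) b)) (seq 0 k)).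
Definition hh (k : nat) (p : nat -> nat) (y : point) : R := ln (cnt k p (y 0%nat)).
Definition gg (k : nat) (p : nat -> nat) (f : point -> R) (y : point) : R :=
  f (sec k p y) + hh k p y.

Lemma ind_nonneg b : 0 <= indR b.
Proof. destruct b; unfold indR; lra. Qed.

Lemma qch_spec k p b : (exists a, (a < k)%nat /\ p a = b) -> (qch k p b < k)%nat /\ p (qch k p b) = b.
Proof. intros [a [Ha Hpa]]. unfold qch.
  assert (Hin : In a (filter (fun a => Nat.eqb (p a) b) (seq 0 k))).
  { apply filter_In. split. apply in_seq; lia. apply Nat.eqb_eq; auto. }
  destruct (filter _ _) as [|a' t] eqn:E; [contradiction|].
  assert (Hin' : In a' (filter (fun a => Nat.eqb (p a) b) (seq 0 k))) by (rewrite E; left; auto).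
  apply filter_In in Hin'. destruct Hin' as [H1 H2]. apply in_seq in H1. apply Nat.eqb_eq in H2. split; [lia|auto]. Qed.

Lemma cnt_pos k p b : (exists a, (a < k)%nat /\ p a = b) -> 0 < cnt k p b.
Proof. intros [a [Ha Hpa]]. unfold cnt.
  assert (H : indR (Nat.eqb (p a) b) <= Rsum (map (fun a => indR (Nat.eqb (p a) b)) (seq 0 k))).
  { apply (Rsum_ge_In (seq 0 k) (fun a => indR (Nat.eqb (p a) b)) a).
    intros; apply ind_nonneg. apply in_seq; lia. } rewrite Hpa, Nat.eqb_refl in H. unfold indR at 1 in H. lra. Qed.

Lemma ind_app (p : nat -> nat) (w v : list nat) (a b : nat) :
  indR (leqb (map p (w ++ [a])) (v ++ [b])) = indR (leqb (map p w) v) * indR (Nat.eqb (p a) b).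
Proof. unfold leqb. rewrite map_app. change (map p [a]) with [p a].
  destruct (list_eq_dec Nat.eq_dec (map p w ++ [p a]) (v ++ [b])) as [e|e].
  - apply app_inj_tail in e. destruct e as [e1 e2]. rewrite e1, e2, Nat.eqb_refl.
    destruct (list_eq_dec Nat.eq_dec v v); [|contradiction]. unfold indR; lra.
  - destruct (list_eq_dec Nat.eq_dec (map p w) v) as [e1|e1]; destruct (Nat.eqb_spec (p a) b) as [e2|e2];
      unfold indR; try lra. subst. contradiction. Qed.

Lemma ind_cons (p : nat -> nat) (w v : list nat) (a b : nat) :
  indR (leqb (map p (a :: w)) (b :: v)) = indR (Nat.eqb (p a) b) * indR (leqb (map p w) v).
Proof. unfold leqb. change (map p (a :: w)) with (p a :: map p w).
  destruct (list_eq_dec Nat.eq_dec (p a :: map p w) (b :: v)) as [e|e].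
  - injection e as e2 e1. subst. rewrite Nat.eqb_refl.
    destruct (list_eq_dec Nat.eq_dec (map p w) (map p w)); [|contradiction]. unfold indR; lra.
  - destruct (list_eq_dec Nat.eq_dec (map p w) v) as [e1|e1]; destruct (Nat.eqb_spec (p a) b) as [e2|e2];
      unfold indR; try lra. subst. contradiction. Qed.

Lemma push_eq k p mu v : pushforward k p mu v =
  Rsum (map (fun w => indR (leqb (map p w) v) * mu w) (words k (length v))).
Proof. unfold pushforward. apply Rsum_filter. Qed.

Lemma push_inv k l p mu : (0 < k)%nat -> (forall a, (a < k)%nat -> (p a < l)%nat) ->
  inv_prob k mu -> inv_prob l (pushforward k p mu).
Proof. intros Hk Hp Hm. pose proof Hm as (Hnn & H1 & Hc & Hi).
  split; [|split; [|split]].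
  - intros v _. rewrite push_eq. apply Rsum_nonneg. intros w Hw.
    destruct (inW _ _ _ Hw) as [Hwv _]. apply Rmult_le_pos; [apply ind_nonneg|auto].
  - rewrite push_eq. simpl. unfold leqb.
    destruct (list_eq_dec Nat.eq_dec (@nil nat) (@nil nat)); [|contradiction]. unfold indR. lra.
  - intros v Hv. rewrite push_eq.
    transitivity (Rsum (map (fun b => Rsum (map (fun w => Rsum (map (fun a =>
      indR (leqb (map p w) v) * (indR (Nat.eqb (p a) b) * mu (w ++ [a]))) (seq 0 k)))
      (words k (length v)))) (seq 0 l))).
    + rewrite Rsum_swap. apply Rsum_ext. intros w Hw. destruct (inW _ _ _ Hw) as [Hwv _].
      rewrite Rsum_swap.
      rewrite (Rsum_ext _ _ (fun a => indR (leqb (map p w) v) * mu (w ++ [a]))).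
      * rewrite Rsum_scal, <- Hc; auto.
      * intros a Ha. apply in_seq in Ha.
        rewrite (Rsum_ext _ _ (fun b => indR (Nat.eqb (p a) b) * (indR (leqb (map p w) v) * mu (w ++ [a])))).
        apply Rsum_delta. apply seq_NoDup. apply in_seq. specialize (Hp a ltac:(lia)). lia.
        intros; ring.
    + apply Rsum_ext. intros b _. rewrite push_eq, length_app. simpl length.
      rewrite Nat.add_1_r, words_S, Rsum_flat_map. apply Rsum_ext. intros w _.
      rewrite Rsum_map_map. apply Rsum_ext. intros a _. rewrite ind_app. ring.
  - intros v Hv. rewrite push_eq.
    transitivity (Rsum (map (fun b => Rsum (map (fun w => Rsum (map (fun a =>
      indR (leqb (map p w) v) * (indR (Nat.eqb (p a) b) * mu (a :: w))) (seq 0 k)))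
      (words k (length v)))) (seq 0 l))).
    + rewrite Rsum_swap. apply Rsum_ext. intros w Hw. destruct (inW _ _ _ Hw) as [Hwv _].
      rewrite Rsum_swap.
      rewrite (Rsum_ext _ _ (fun a => indR (leqb (map p w) v) * mu (a :: w))).
      * rewrite Rsum_scal, <- Hi; auto.
      * intros a Ha. apply in_seq in Ha.
        rewrite (Rsum_ext _ _ (fun b => indR (Nat.eqb (p a) b) * (indR (leqb (map p w) v) * mu (a :: w)))).
        apply Rsum_delta. apply seq_NoDup. apply in_seq. specialize (Hp a ltac:(lia)). lia.
        intros; ring.
    + apply Rsum_ext. intros b _. rewrite push_eq. simpl length.
      change (S (length v)) with (1 + length v)%nat. rewrite words_app, words_1, Rsum_map_map.
      rewrite Rsum_swap. apply Rsum_ext. intros a _. apply Rsum_ext. intros w _.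
      change ([a] ++ w) with (a :: w). rewrite ind_cons. ring. Qed.

Lemma N_eq k l p y n : (forall b, (b < l)%nat -> exists a, (a < k)%nat /\ p a = b) -> inX l y ->
  exp (Sn (hh k p) n y) = INR (length (preimage_words k p y n)).
Proof. intros Hs Hy. unfold preimage_words. rewrite length_filter_ind.
  change (fun x => indR (if list_eq_dec Nat.eq_dec (map p x) (prefix y n) then true else false))
    with (fun x => indR (leqb (map p x) (prefix y n))).
  induction n.
  - rewrite Sn_0, exp_0. simpl. unfold leqb.
    destruct (list_eq_dec Nat.eq_dec (@nil nat) (@nil nat)); [|contradiction]. unfold indR; lra.
  - rewrite Sn_S, exp_plus, prefix_S, words_S, Rsum_flat_map.
    rewrite (Rsum_ext _ _ (fun w => cnt k p (y n) * indR (leqb (map p w) (prefix y n)))).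
    + rewrite Rsum_scal, <- IHn. unfold hh at 2, shiftn. rewrite Nat.add_0_r, exp_ln. ring.
      apply cnt_pos, Hs, Hy.
    + intros w _. rewrite Rsum_map_map.
      rewrite (Rsum_ext _ _ (fun a => indR (leqb (map p w) (prefix y n)) * indR (Nat.eqb (p a) (y n)))).
      rewrite Rsum_scal. unfold cnt. ring.
      intros a _. apply ind_app. Qed.

Lemma leqb_true v w : leqb v w = true -> v = w.
Proof. unfold leqb. destruct (list_eq_dec Nat.eq_dec v w); auto; discriminate. Qed.

Lemma map_prefix_nth (p : nat -> nat) w z n i : map p w = prefix z n -> (i < n)%nat -> p (nth i w 0%nat) = z i.
Proof. intros H Hi. assert (Hl : length w = n).
  { rewrite <- (length_map p w), H. apply prefix_length. }
  apply (f_equal (fun l => nth i l (p 0%nat))) in H. rewrite map_nth in H. rewrite H.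
  unfold prefix. rewrite nth_indep with (d' := z 0%nat) by (rewrite length_map, length_seq; auto).
  rewrite map_nth, seq_nth; auto. Qed.

Lemma ratio_lemma A N G F1 F2 : 0 < A -> 0 < N -> 0 < F1 -> 0 < F2 ->
  / A <= G / (N * F1) <= A -> / A <= G / (N * F2) <= A -> F1 <= A * A * F2.
Proof. intros HA HN H1 H2 [a1 b1] [a2 b2].
  assert (0 < N * F1) by (apply Rmult_lt_0_compat; auto).
  assert (0 < N * F2) by (apply Rmult_lt_0_compat; auto).
  assert (G1 : G = G / (N * F1) * (N * F1)) by (field; lra).
  assert (G2 : G = G / (N * F2) * (N * F2)) by (field; lra).
  set (t1 := G / (N * F1)) in *. set (t2 := G / (N * F2)) in *.
  assert (/ A * (N * F1) <= t1 * (N * F1)) by (apply Rmult_le_compat_r; lra).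
  assert (t2 * (N * F2) <= A * (N * F2)) by (apply Rmult_le_compat_r; lra).
  assert (N * F1 <= A * A * (N * F2)).
  { replace (N * F1) with (A * (/ A * (N * F1))) by (field; lra).
    replace (A * A * (N * F2)) with (A * (A * (N * F2))) by ring.
    apply Rmult_le_compat_l; lra. }
  replace (A * A * (N * F2)) with (N * (A * A * F2)) in H3 by ring.
  apply Rmult_le_reg_l with N; auto. lra. Qed.

Lemma push_gibbs k l p f mu : (0 < k)%nat ->
  (forall b, (b < l)%nat -> exists a, (a < k)%nat /\ p a = b) ->
  Gibbs k f mu ->
  (exists A, 0 < A /\
     forall n y, inX l y ->
       exists gbar, is_lub (En_sums k p f n y) gbar /\
       forall x, inX k x ->
         (forall z, inX k z -> agree n x z -> agree n (pimap p z) y) ->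
         / A <= gbar / (INR (length (preimage_words k p y n)) * fn f n x) <= A) ->
  Gibbs l (gg k p f) (pushforward k p mu).
Proof. intros Hk Hs G [A [HA HR]].
  destruct (gibbs_bounds k f mu G) as [P [C0 [HC0 B]]].
  set (K := C0 * A * A). assert (HK : 0 < K) by (unfold K; repeat apply Rmult_lt_0_compat; auto).
  exists P, (2 * K). split; [lra|]. intros z n Hz Hn.
  set (sy := sec k p z).
  assert (Hsy : inX k sy) by (intros i; apply qch_spec, Hs, Hz).
  assert (Hcsy : forall z', inX k z' -> agree n sy z' -> agree n (pimap p z') z).
  { intros z' _ Ha i Hi. unfold pimap. rewrite <- (Ha i Hi). unfold sy, sec. apply qch_spec, Hs, Hz. }
  destruct (HR n z Hz) as [G0 [_ HG]].
  set (PW := preimage_words k p z n).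
  set (N := INR (length PW)).
  assert (HN : exp (Sn (hh k p) n z) = N) by (apply (N_eq k l); auto).
  assert (HNp : 0 < N) by (rewrite <- HN; apply exp_pos).
  set (e := exp (- INR n * P)). assert (He : 0 < e) by apply exp_pos.
  set (fs := fn f n sy). assert (Hfs : 0 < fs) by apply exp_pos.
  pose proof (HG sy Hsy Hcsy) as Rs. fold PW N fs in Rs.
  assert (Hb : forall w, In w PW -> / K * (e * fs) <= mu w <= K * (e * fs)).
  { intros w Hw. unfold PW, preimage_words in Hw. apply filter_In in Hw. destruct Hw as [Hw Hq].
    apply leqb_true in Hq. destruct (inW _ _ _ Hw) as [Hwv Hwl].
    set (zw := ext w). assert (Hzw : inX k zw) by (apply ext_inX; auto).
    assert (Hc : forall z', inX k z' -> agree n zw z' -> agree n (pimap p z') z).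
    { intros z' _ Ha i Hi. unfold pimap. rewrite <- (Ha i Hi). unfold zw, ext.
      apply (map_prefix_nth p w z n i); auto. }
    pose proof (HG zw Hzw Hc) as Rw. fold PW N in Rw.
    set (fw := fn f n zw) in *. assert (Hfw : 0 < fw) by apply exp_pos.
    pose proof (ratio_lemma A N G0 fw fs HA HNp Hfw Hfs Rw Rs) as Q1.
    pose proof (ratio_lemma A N G0 fs fw HA HNp Hfs Hfw Rs Rw) as Q2.
    destruct (B zw n Hzw Hn) as [L1 U1].
    assert (Hp : prefix zw n = w) by (unfold zw; rewrite <- Hwl; apply prefix_ext).
    rewrite Hp in L1, U1.
    assert (HE : Ebw f P zw n = e * fw) by (unfold Ebw, e, fw, fn; apply exp_plus).
    rewrite HE in L1, U1. split.
    - assert (fs / (A * A) <= fw).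
      { apply Rmult_le_reg_r with (A * A). nra. replace (fs / (A * A) * (A * A)) with fs by (field; lra). lra. }
      replace (/ K * (e * fs)) with (/ C0 * (e * (fs / (A * A)))) by (unfold K; field; lra).
      assert (/ C0 * (e * (fs / (A * A))) <= / C0 * (e * fw)).
      { apply Rmult_le_compat_l. left; apply Rinv_0_lt_compat; auto.
        apply Rmult_le_compat_l; lra. }
      lra.
    - assert (C0 * (e * fw) <= C0 * (e * (A * A * fs))).
      { apply Rmult_le_compat_l; [lra|]. apply Rmult_le_compat_l; lra. }
      replace (K * (e * fs)) with (C0 * (e * (A * A * fs))) by (unfold K; ring). lra. }
  assert (Hnu : pushforward k p mu (prefix z n) = Rsum (map mu PW)).
  { unfold pushforward. rewrite prefix_length. reflexivity. }
  assert (Hup : Rsum (map mu PW) <= N * (K * (e * fs))) by (apply Rsum_le_const; intros; apply Hb; auto).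
  assert (Hlo : N * (/ K * (e * fs)) <= Rsum (map mu PW)) by (apply Rsum_ge_const; intros; apply Hb; auto).
  assert (HE : exp (- INR n * P + Sn (gg k p f) n z) = e * fs * N).
  { unfold gg. rewrite Sn_plus.
    change (Sn (fun y => f (sec k p y)) n z) with (Sn f n sy).
    rewrite !exp_plus, HN. unfold e, fs, fn. ring. }
  rewrite Hnu, HE. set (E := e * fs * N) in *.
  assert (HEp : 0 < E) by (unfold E; repeat apply Rmult_lt_0_compat; auto).
  replace (N * (K * (e * fs))) with (K * E) in Hup by (unfold E; ring).
  replace (N * (/ K * (e * fs))) with (/ K * E) in Hlo by (unfold E; ring).
  set (S := Rsum (map mu PW)) in *.
  split.
  - apply Rmult_lt_reg_r with E; auto. replace (S / E * E) with S by (field; lra).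
    replace (/ (2 * K) * E) with (/ 2 * (/ K * E)) by (field; lra).
    assert (0 < / K * E) by (apply Rmult_lt_0_compat; auto; apply Rinv_0_lt_compat; auto). lra.
  - apply Rmult_lt_reg_r with E; auto. replace (S / E * E) with S by (field; lra).
    assert (0 < K * E) by (apply Rmult_lt_0_compat; auto). lra. Qed.

Lemma gg_cont k l p f : (forall b, (b < l)%nat -> exists a, (a < k)%nat /\ p a = b) ->
  continuous_on_shift k f -> continuous_on_shift l (gg k p f).
Proof. intros Hs Hf y Hy eps He.
  assert (Hsy : inX k (sec k p y)) by (intros i; apply qch_spec, Hs, Hy).
  destruct (Hf (sec k p y) Hsy eps He) as [m Hm]. exists (S m).
  intros z Hz Ha. assert (Hsz : inX k (sec k p z)) by (intros i; apply qch_spec, Hs, Hz).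
  assert (Hag : agree m (sec k p y) (sec k p z)).
  { intros i Hi. unfold sec. rewrite (Ha i ltac:(lia)). auto. }
  specialize (Hm _ Hsz Hag). unfold gg, hh. rewrite (Ha 0%nat ltac:(lia)).
  replace (f (sec k p z) + ln (cnt k p (z 0%nat)) - (f (sec k p y) + ln (cnt k p (z 0%nat))))
    with (f (sec k p z) - f (sec k p y)) by ring. auto. Qed.

Lemma gg_bow k l p f : (forall b, (b < l)%nat -> exists a, (a < k)%nat /\ p a = b) ->
  Bow k f -> Bow l (gg k p f).
Proof. intros Hs [C HC]. exists C. intros n z z' Hz Hz' Ha.
  unfold gg. rewrite !Sn_plus.
  change (Sn (fun y => f (sec k p y)) n z) with (Sn f n (sec k p z)).
  change (Sn (fun y => f (sec k p y)) n z') with (Sn f n (sec k p z')).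
  assert (Sn (hh k p) n z = Sn (hh k p) n z').
  { apply Sn_ext. intros i Hi. unfold hh, shiftn. rewrite Nat.add_0_r, (Ha i Hi). auto. }
  assert (Sn f n (sec k p z) - Sn f n (sec k p z') <= C).
  { apply HC; try (intros i; apply qch_spec, Hs; auto).
    intros i Hi. unfold sec. rewrite (Ha i Hi). auto. }
  lra. Qed.

Theorem proposition5p12
  (k l : nat) (p : nat -> nat) (f : point -> R) (mu : list nat -> R)
  (Hk : (0 < k)%nat) (Hl : (0 < l)%nat)
  (Hp_range : forall a, (a < k)%nat -> (p a < l)%nat)
  (Hp_surj : forall b, (b < l)%nat -> exists a, (a < k)%nat /\ p a = b)
  (Hf_cont : continuous_on_shift k f) (Hf_bow : Bow k f)
  (Hmu_inv : inv_prob k mu) (Hmu_gibbs : Gibbs k f mu)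
  (Hratio : exists A, 0 < A /\
     forall n y, inX l y ->
       exists gbar, is_lub (En_sums k p f n y) gbar /\
       forall x, inX k x ->
         (forall z, inX k z -> agree n x z -> agree n (pimap p z) y) ->
         / A <= gbar / (INR (length (preimage_words k p y n)) * fn f n x) <= A) :
  exists g : point -> R,
    continuous_on_shift l g /\ Bow l g /\
    inv_prob l (pushforward k p mu) /\ Gibbs l g (pushforward k p mu) /\
    (forall m, inv_prob l m -> Gibbs l g m -> same_measure l m (pushforward k p mu)).
Proof.
  exists (gg k p f). split; [apply gg_cont; auto|]. split; [apply gg_bow; auto|].
  assert (Hinv : inv_prob l (pushforward k p mu)) by (apply push_inv; auto).
  assert (Hg : Gibbs l (gg k p f) (pushforward k p mu)) by (apply push_gibbs; auto).
  split; auto. split; auto. intros m Hm Gm. apply (gibbs_unique l (gg k p f)); auto. Qed.
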